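(* Let $\phi:\mathcal A\to\mathcal A$ be a peak selection for $(C_u)_{u\in\mathcal A}$ satisfying (AC1) and (AC2) with constants $\gamma,\delta$, and let $\alpha:=\tfrac12(1-\delta)\cos\gamma$ be the constant used in the definition of the stepsize sets $S(\cdot)$. If $u_0\in\operatorname{Ran}\phi$, $\nabla\mathcal E(u_0)\ne0$ and $\phi$ is continuous at $u_0$, then there exist an open neighborhood $V$ of $u_0$ and $s^*>0$ such that $S(u)\subset[s^*,+\infty)$ for every $u\in V\cap\operatorname{Ran}\phi$.
   Context: $\mathcal H$ is a real Hilbert space with inner product $\langle\cdot,\cdot\rangle$ and norm $\|\cdot\|$; $\mathcal E\in C^1(\mathcal H;\mathbb R)$; $\mathcal A\subset\mathcal H$ is open; $B(u,r)$ is the open ball. For a closed cone $C$, $\operatorname{span}C$ is the smallest closed linear subspace containing $C$, $\operatorname{int}C$ is the interior of $C$ relative to $\operatorname{span}C$; $d\perp C$ means $d\perp\operatorname{span}C$. A peak selection for $(C_u)_{u\in\mathcal A}$ is a map $\phi:\mathcal A\to\mathcal A$ such that for all $u\in\mathcal A$: (1) $C_u$ is a closed cone with vertex $0$; (2) $\phi(u)\in\operatorname{int}C_u$; (3) $\phi(v)=\phi(u)$ for every $v\in\operatorname{int}C_u$; (4) $\phi(u)$ is a global maximum point of $\mathcal E$ on $C_u$. $A_\gamma(d):=\{d':\|d'\|=\|d\|,\ \arccos(\langle d,d'\rangle/(\|d\|\|d'\|))\le\gamma\}$ for $d\ne0$, $A_\gamma(0)=\{0\}$; $I\,S:=\{ts:t\in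 I,s\in S\}$. (AC1): for all $u\in\mathcal A$, $u\in C_u$. (AC2): there exist $\gamma\in(0,\pi/2)$, $\delta\in(0,1)$ such that for every $u_0\in\operatorname{Ran}\phi$ there is $r>0$ such that for all $\tilde u_0\in\operatorname{Ran}\phi\cap B(u_0,r)$ and all $d\in B(0,r)$ with $d\perp C_{\tilde u_0}$ and $\tilde u_0+d\in\mathcal A$: $C_{\tilde u_0+d}\cap B(u_0,r)\subset C_{\tilde u_0}+[1-\delta,1+\delta]A_\gamma(d)$. Stepsizes: for $u_0\in\operatorname{Ran}\phi$ with $\nabla\mathcal E(u_0)\ne0$, $S^*(u_0):=\{s>0: u_s:=u_0-s\nabla\mathcal E(u_0)/\|\nabla\mathcal E(u_0)\|\in\mathcal A \text{ and } \mathcal E(\phi(u_s))-\mathcal E(u_0)<-\alpha s\|\nabla\mathcal E(u_0)\|\}$ and $S(u_0):=S^*(u_0)\cap[\tfrac12\sup S^*(u_0),+\infty)$. *)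

(* Defs.v *)
From Stdlib Require Import Reals Lra.
Open Scope R_scope.

Record Hilbert := mkHilbert {
  hcar :> Type;
  hadd : hcar -> hcar -> hcar;
  hopp : hcar -> hcar;
  hzero : hcar;
  hscal : R -> hcar -> hcar;
  hinner : hcar -> hcar -> R;
  hadd_assoc : forall x y z, hadd x (hadd y z) = hadd (hadd x y) z;
  hadd_comm : forall x y, hadd x y = hadd y x;
  hadd_zero : forall x, hadd hzero x = x;
  hadd_opp : forall x, hadd x (hopp x) = hzero;
  hscal_assoc : forall a b x, hscal a (hscal b x) = hscal (a * b) x;
  hscal_one : forall x, hscal 1 x = x;
  hscal_distr_v : forall a x y, hscal a (hadd x y) = hadd (hscal a x) (hscal a y);
  hscal_distr_s : forall a b x, hscal (a + b) x = hadd (hscal a x) (hscal b x);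
  hinner_sym : forall x y, hinner x y = hinner y x;
  hinner_add : forall x y z, hinner (hadd x y) z = hinner x z + hinner y z;
  hinner_scal : forall a x y, hinner (hscal a x) y = a * hinner x y;
  hinner_pos : forall x, 0 <= hinner x x;
  hinner_def : forall x, hinner x x = 0 -> x = hzero;
  hcomplete : forall u : nat -> hcar,
    (forall eps, eps > 0 -> exists N, forall n m, (n >= N)%nat -> (m >= N)%nat ->
        sqrt (hinner (hadd (u n) (hopp (u m))) (hadd (u n) (hopp (u m)))) < eps) ->
    exists l, forall eps, eps > 0 -> exists N, forall n, (n >= N)%nat ->
        sqrt (hinner (hadd (u n) (hopp l)) (hadd (u n) (hopp l))) < eps
}.

Arguments hadd {h}. Arguments hopp {h}. Arguments hzero {h}.
Arguments hscal {h}. Arguments hinner {h}.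

Section HDefs.
Context {H : Hilbert}.

Definition hsub (x y : H) : H := hadd x (hopp y).
Definition hnorm (x : H) : R := sqrt (hinner x x).

Definition ball (u : H) (r : R) (x : H) : Prop := hnorm (hsub x u) < r.

Definition is_open (S : H -> Prop) : Prop :=
  forall x, S x -> exists r, r > 0 /\ forall y, ball x r y -> S y.

Definition is_closed (S : H -> Prop) : Prop :=
  is_open (fun x => ~ S x).

Definition is_cone (C : H -> Prop) : Prop :=
  forall t x, 0 <= t -> C x -> C (hscal t x).
Definition closed_cone (C : H -> Prop) : Prop := is_closed C /\ is_cone C.

Definition closed_subspace (M : H -> Prop) : Prop :=
  is_closed M /\ M hzero /\ (forall x y, M x -> M y -> M (hadd x y)) /\
  (forall a x, M x -> M (hscal a x)).

Definition span (C : H -> Prop) (x : H) : Prop :=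
  forall M, closed_subspace M -> (forall y, C y -> M y) -> M x.

Definition rel_int (C : H -> Prop) (x : H) : Prop :=
  C x /\ exists r, r > 0 /\ forall y, span C y -> ball x r y -> C y.

Definition orth (d : H) (C : H -> Prop) : Prop :=
  forall y, span C y -> hinner d y = 0.

Definition peak_selection (E : H -> R) (A : H -> Prop) (C : H -> H -> Prop)
  (phi : H -> H) : Prop :=
  (forall u, A u -> A (phi u)) /\
  forall u, A u ->
    closed_cone (C u) /\
    rel_int (C u) (phi u) /\
    (forall v, rel_int (C u) v -> phi v = phi u) /\
    (C u (phi u) /\ forall w, C u w -> E w <= E (phi u)).

Definition Ran (A : H -> Prop) (phi : H -> H) (v : H) : Prop :=
  exists u, A u /\ phi u = v.

Definition Agamma (gamma : R) (d d' : H) : Prop :=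
  (d <> hzero /\ hnorm d' = hnorm d /\
     acos (hinner d d' / (hnorm d * hnorm d')) <= gamma)
  \/ (d = hzero /\ d' = hzero).

Definition cone_plus (C : H -> Prop) (gamma delta : R) (d x : H) : Prop :=
  exists c t s, C c /\ 1 - delta <= t <= 1 + delta /\ Agamma gamma d s /\
    x = hadd c (hscal t s).

Definition AC1 (A : H -> Prop) (C : H -> H -> Prop) : Prop :=
  forall u, A u -> C u u.

Definition AC2 (A : H -> Prop) (C : H -> H -> Prop) (phi : H -> H)
  (gamma delta : R) : Prop :=
  0 < gamma < PI / 2 /\ 0 < delta < 1 /\
  forall u0, Ran A phi u0 -> exists r, r > 0 /\
    forall tu0 d, Ran A phi tu0 -> ball u0 r tu0 -> ball hzero r d ->
      orth d (C tu0) -> A (hadd tu0 d) ->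
      forall x, C (hadd tu0 d) x -> ball u0 r x -> cone_plus (C tu0) gamma delta d x.

(** E is C^1 with gradient gradE (Riesz representative of the Frechet derivative) *)
Definition is_C1_gradient (E : H -> R) (gradE : H -> H) : Prop :=
  (forall u eps, eps > 0 -> exists dl, dl > 0 /\ forall h, hnorm h < dl ->
     Rabs (E (hadd u h) - E u - hinner (gradE u) h) <= eps * hnorm h) /\
  (forall u eps, eps > 0 -> exists dl, dl > 0 /\ forall v, hnorm (hsub v u) < dl ->
     hnorm (hsub (gradE v) (gradE u)) < eps).

Definition u_s (gradE : H -> H) (u0 : H) (s : R) : H :=
  hsub u0 (hscal (s / hnorm (gradE u0)) (gradE u0)).

Definition Sstar (E : H -> R) (gradE : H -> H) (A : H -> Prop) (phi : H -> H)
  (alpha : R) (u0 : H) (s : R) : Prop :=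
  s > 0 /\ A (u_s gradE u0 s) /\
  E (phi (u_s gradE u0 s)) - E u0 < - alpha * s * hnorm (gradE u0).

(** S(u0) = S*(u0) ∩ [sup S*(u0)/2, +oo); empty if sup S* = +oo (no lub). *)
Definition Sset (E : H -> R) (gradE : H -> H) (A : H -> Prop) (phi : H -> H)
  (alpha : R) (u0 : H) (s : R) : Prop :=
  Sstar E gradE A phi alpha u0 s /\
  exists m, is_lub (Sstar E gradE A phi alpha u0) m /\ m / 2 <= s.

Definition continuous_at_on (A : H -> Prop) (phi : H -> H) (u0 : H) : Prop :=
  forall eps, eps > 0 -> exists dl, dl > 0 /\
    forall v, A v -> hnorm (hsub v u0) < dl -> hnorm (hsub (phi v) (phi u0)) < eps.

End HDefs.

(* Main.v *)
Require Import Defs.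
From Stdlib Require Import Reals Lra Psatz.
Open Scope R_scope.

Arguments hadd_assoc {h}.
Arguments hadd_comm {h}.
Arguments hadd_zero {h}.
Arguments hadd_opp {h}.
Arguments hscal_assoc {h}.
Arguments hscal_one {h}.
Arguments hscal_distr_v {h}.
Arguments hscal_distr_s {h}.
Arguments hinner_sym {h}.
Arguments hinner_add {h}.
Arguments hinner_scal {h}.
Arguments hinner_pos {h}.
Arguments hinner_def {h}.

Section Alg.
Context {H : Hilbert}.
Implicit Types x y z : H.

Lemma hadd_zero_r x : hadd x hzero = x.
Proof. rewrite hadd_comm; apply hadd_zero. Qed.

Lemma hscal_zero x : hscal 0 x = hzero.
Proof.
  assert (E : hscal 0 x = hadd (hscal 0 x) (hscal 0 x)).
  { rewrite <- hscal_distr_s. f_equal; ring. }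
  set (y := hscal 0 x) in *.
  rewrite <- (hadd_opp y). rewrite E at 2.
  rewrite <- hadd_assoc, hadd_opp, hadd_zero_r. reflexivity.
Qed.

Lemma hopp_scal x : hopp x = hscal (-1) x.
Proof.
  assert (E : hadd x (hscal (-1) x) = hzero).
  { rewrite <- (hscal_one x) at 1. rewrite <- hscal_distr_s.
    replace (1 + -1) with 0 by ring. apply hscal_zero. }
  rewrite <- (hadd_zero_r (hopp x)). rewrite <- E.
  rewrite hadd_assoc. rewrite (hadd_comm (hopp x) x), hadd_opp, hadd_zero. reflexivity.
Qed.

Lemma hinner_add_r x y z : hinner x (hadd y z) = hinner x y + hinner x z.
Proof. rewrite hinner_sym, hinner_add, (hinner_sym y), (hinner_sym z). ring. Qed.

Lemma hinner_scal_r a x y : hinner x (hscal a y) = a * hinner x y.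
Proof. rewrite hinner_sym, hinner_scal, (hinner_sym y). ring. Qed.

Lemma hinner_opp_l x y : hinner (hopp x) y = - hinner x y.
Proof. rewrite hopp_scal, hinner_scal. ring. Qed.

Lemma hinner_sub_l x y z : hinner (hsub x y) z = hinner x z - hinner y z.
Proof. unfold hsub. rewrite hinner_add, hinner_opp_l. ring. Qed.

Lemma hnorm_pos x : 0 <= hnorm x.
Proof. apply sqrt_pos. Qed.

Lemma hnorm_sq x : hnorm x * hnorm x = hinner x x.
Proof. unfold hnorm. apply sqrt_sqrt, hinner_pos. Qed.

Lemma hinner_expand x y t :
  hinner (hadd x (hscal t y)) (hadd x (hscal t y)) =
  hinner x x + 2 * t * hinner x y + t * t * hinner y y.
Proof.
  rewrite hinner_add, !hinner_add_r, !hinner_scal, !hinner_scal_r, (hinner_sym y x). ring.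
Qed.

Lemma cauchy_sq x y : hinner x y * hinner x y <= hinner x x * hinner y y.
Proof.
  destruct (Req_dec (hinner y y) 0) as [H0|H0].
  - apply hinner_def in H0. subst y.
    rewrite <- (hscal_zero hzero). rewrite hinner_scal_r. rewrite hinner_scal.
    pose proof (hinner_pos x). nra.
  - pose proof (hinner_pos y). pose proof (hinner_pos (hadd x (hscal (- (hinner x y / hinner y y)) y))) as P.
    rewrite hinner_expand in P.
    assert (Q : 0 < hinner y y) by lra.
    set (a := hinner x y) in *. set (b := hinner y y) in *. set (c := hinner x x) in *.
    assert (P' : 0 <= c * b - a * a).
    { replace (c * b - a * a) with (b * (c + 2 * - (a / b) * a + - (a / b) * - (a / b) * b)).
      apply Rmult_le_pos; lra. field. lra. }
    lra.
Qed.

Lemma cauchy x y : Rabs (hinner x y) <= hnorm x * hnorm y.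
Proof.
  unfold hnorm. rewrite <- sqrt_mult by apply hinner_pos.
  rewrite <- sqrt_Rsqr_abs. apply sqrt_le_1_alt. unfold Rsqr. apply cauchy_sq.
Qed.

Lemma cauchy_le x y : hinner x y <= hnorm x * hnorm y.
Proof. pose proof (cauchy x y). pose proof (Rle_abs (hinner x y)). lra. Qed.

Lemma hnorm_scal a x : hnorm (hscal a x) = Rabs a * hnorm x.
Proof.
  unfold hnorm. rewrite hinner_scal, hinner_scal_r.
  replace (a * (a * hinner x x)) with (Rsqr a * hinner x x) by (unfold Rsqr; ring).
  rewrite sqrt_mult by (try apply Rle_0_sqr; apply hinner_pos).
  rewrite sqrt_Rsqr_abs. reflexivity.
Qed.

Lemma hnorm_opp x : hnorm (hopp x) = hnorm x.
Proof. rewrite hopp_scal, hnorm_scal. rewrite Rabs_left by lra. ring. Qed.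

Lemma hnorm_triangle x y : hnorm (hadd x y) <= hnorm x + hnorm y.
Proof.
  pose proof (hnorm_pos x). pose proof (hnorm_pos y). pose proof (hnorm_pos (hadd x y)).
  apply Rsqr_incr_0_var; [|lra]. unfold Rsqr.
  rewrite hnorm_sq. rewrite <- (hscal_one y) at 1 2. rewrite hinner_expand.
  rewrite <- !hnorm_sq. pose proof (cauchy_le x y). nra.
Qed.

Lemma hsub_add_l (a b c : H) : hsub (hadd a b) c = hadd (hsub a c) b.
Proof.
  unfold hsub. rewrite <- !hadd_assoc. f_equal. apply hadd_comm.
Qed.

Lemma hsub_chain (a b c : H) : hsub a b = hadd (hsub a c) (hsub c b).
Proof.
  unfold hsub. rewrite <- hadd_assoc. f_equal.
  rewrite hadd_assoc, (hadd_comm (hopp c) c), hadd_opp, hadd_zero. reflexivity.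
Qed.

Lemma hsub_self (a : H) : hsub a a = hzero.
Proof. apply hadd_opp. Qed.

Lemma hnorm_sub_sym (a b : H) : hnorm (hsub a b) = hnorm (hsub b a).
Proof.
  rewrite <- hnorm_opp. f_equal. unfold hsub.
  rewrite !hopp_scal, hscal_distr_v, hscal_assoc.
  replace (-1 * -1) with 1 by ring. rewrite hscal_one. apply hadd_comm.
Qed.

Lemma hnorm_sub_tri (a b c : H) : hnorm (hsub a b) <= hnorm (hsub a c) + hnorm (hsub c b).
Proof. rewrite (hsub_chain a b c). apply hnorm_triangle. Qed.

Lemma hsub_add_cancel (a b : H) : hsub (hadd a b) a = b.
Proof. rewrite hsub_add_l, hsub_self. apply hadd_zero. Qed.

Lemma hadd_sub_cancel (a b : H) : hadd (hsub a b) b = a.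
Proof. unfold hsub. rewrite <- hadd_assoc, (hadd_comm (hopp b)), hadd_opp. apply hadd_zero_r. Qed.

Lemma hnorm_zero_inv x : hnorm x = 0 -> x = hzero.
Proof.
  intro E. apply hinner_def. rewrite <- hnorm_sq, E. ring.
Qed.

Lemma hnorm_zero : hnorm (@hzero H) = 0.
Proof. rewrite <- (hscal_zero hzero), hnorm_scal, Rabs_R0. ring. Qed.

Lemma ball_open (u : H) r : is_open (ball u r).
Proof.
  intros x Hx. unfold ball in *. exists (r - hnorm (hsub x u)). split; [lra|].
  intros y Hy. pose proof (hnorm_sub_tri y u x). lra.
Qed.

End Alg.

Lemma hsub_zero {H : Hilbert} (x : H) : hsub x hzero = x.
Proof.
  unfold hsub. rewrite hopp_scal. rewrite <- (hscal_zero (@hzero H)), hscal_assoc.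
  replace (-1 * 0) with 0 by ring. rewrite hscal_zero. apply hadd_zero_r.
Qed.

Lemma abs_le_inv x b : Rabs x <= b -> -b <= x <= b.
Proof. unfold Rabs; destruct (Rcase_abs x); lra. Qed.

Section Main.
Context {H : Hilbert}.

Lemma span_of (C : H -> Prop) x : C x -> span C x.
Proof. intros Cx M _ HM. auto. Qed.

Lemma span_add (C : H -> Prop) x y : span C x -> span C y -> span C (hadd x y).
Proof. intros Hx Hy M HM HCM. pose proof HM as (_ & _ & Ha & _). apply Ha; [apply Hx | apply Hy]; auto. Qed.

Lemma span_scal (C : H -> Prop) a x : span C x -> span C (hscal a x).
Proof. intros Hx M HM HCM. pose proof HM as (_ & _ & _ & Hs). apply Hs; apply Hx; auto. Qed.

Lemma fix_phi E A (C : H -> H -> Prop) phi u :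
  peak_selection E A C phi -> Ran A phi u -> phi u = u /\ A u.
Proof.
  intros [HAphi Hps] [w [Aw Hw]]. subst u.
  destruct (Hps w Aw) as (_ & Hri & Hconst & _).
  split; [apply Hconst; exact Hri | auto].
Qed.

Lemma grad_orth (E : H -> R) gradE (C : H -> Prop) u :
  is_C1_gradient E gradE -> rel_int C u -> (forall w, C w -> E w <= E u) ->
  forall y, span C y -> hinner (gradE u) y = 0.
Proof.
  intros [D _] [Cu [r [rpos Hr]]] Hmax y Hy.
  set (a := hinner (gradE u) y).
  destruct (Req_dec a 0) as [|Ha]; auto. exfalso.
  pose proof (hnorm_pos y) as Py.
  assert (Pa : 0 < Rabs a) by (apply Rabs_pos_lt; auto).
  set (eps := Rabs a / (2 * (hnorm y + 1))).
  assert (epos : eps > 0) by (unfold eps; apply Rdiv_lt_0_compat; lra).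
  destruct (D u eps epos) as [dl [dlpos Hd]].
  set (m := Rmin dl r).
  assert (mpos : 0 < m) by (unfold m; apply Rmin_glb_lt; lra).
  set (k := m / (2 * (hnorm y + 1))).
  assert (kpos : 0 < k) by (unfold k; apply Rdiv_lt_0_compat; lra).
  assert (kym : k * hnorm y < m).
  { unfold k. apply Rmult_lt_reg_r with (2 * (hnorm y + 1)); [lra|].
    field_simplify; [|lra]. nra. }
  assert (Key : forall sg, Rabs sg = 1 -> sg * k * a <= eps * (k * hnorm y)).
  { intros sg Hsg.
    set (h := hscal (sg * k) y).
    assert (Hh : hnorm h = k * hnorm y).
    { unfold h. rewrite hnorm_scal, Rabs_mult, Hsg, (Rabs_pos_eq k) by lra. ring. }
    assert (Hm1 : m <= dl) by apply Rmin_l.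
    assert (Hm2 : m <= r) by apply Rmin_r.
    specialize (Hd h ltac:(lra)).
    assert (Cuh : C (hadd u h)).
    { apply Hr. apply span_add; [apply span_of; auto | apply span_scal; auto].
      unfold ball. rewrite hsub_add_cancel. lra. }
    specialize (Hmax _ Cuh).
    assert (Hi : hinner (gradE u) h = sg * k * a) by (unfold h; rewrite hinner_scal_r; reflexivity).
    rewrite Hi, Hh in Hd.
    apply abs_le_inv in Hd. lra. }
  pose proof (Key 1 ltac:(rewrite Rabs_R1; reflexivity)) as K1.
  pose proof (Key (-1) ltac:(rewrite Rabs_left by lra; lra)) as K2.
  assert (Ka : Rabs a * k <= eps * (k * hnorm y)).
    { unfold Rabs; destruct (Rcase_abs a); nra. }
  assert (Ke : eps * hnorm y < Rabs a / 2).
  { unfold eps. apply Rmult_lt_reg_r with (2 * (hnorm y + 1)); [lra|].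
    field_simplify; [|lra]. nra. }
  nra.
Qed.

Lemma deriv_line (E : H -> R) gradE c h th :
  is_C1_gradient E gradE ->
  derivable_pt_lim (fun tau => E (hadd c (hscal tau h))) th
    (hinner (gradE (hadd c (hscal th h))) h).
Proof.
  intros [D _] eps epos.
  set (p := hadd c (hscal th h)).
  pose proof (hnorm_pos h) as Ph.
  set (e' := eps / (2 * (hnorm h + 1))).
  assert (e'pos : e' > 0) by (unfold e'; apply Rdiv_lt_0_compat; lra).
  destruct (D p e' e'pos) as [dl [dlpos Hd]].
  assert (dpos : 0 < dl / (hnorm h + 1)) by (apply Rdiv_lt_0_compat; lra).
  exists (mkposreal _ dpos). intros k kne kabs. simpl in kabs.
  assert (Eq : hadd c (hscal (th + k) h) = hadd p (hscal k h)).
  { unfold p. rewrite hscal_distr_s, hadd_assoc. reflexivity. }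
  rewrite Eq. fold p.
  assert (Pk : 0 < Rabs k) by (apply Rabs_pos_lt; auto).
  assert (Hkh : hnorm (hscal k h) < dl).
  { rewrite hnorm_scal.
    apply Rmult_lt_compat_r with (r := hnorm h + 1) in kabs; [|lra].
    field_simplify in kabs; [|lra]. nra. }
  specialize (Hd _ Hkh). rewrite hnorm_scal, hinner_scal_r in Hd.
  set (Y := E (hadd p (hscal k h)) - E p - k * hinner (gradE p) h) in Hd.
  replace ((E (hadd p (hscal k h)) - E p) / k - hinner (gradE p) h) with (Y / k)
    by (unfold Y; field; auto).
  unfold Rdiv. rewrite Rabs_mult, Rabs_inv.
  assert (Hb : Rabs Y * / Rabs k <= e' * hnorm h).
  { apply Rmult_le_reg_r with (Rabs k); [lra|].
    field_simplify; lra. }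
  assert (e' * hnorm h < eps).
  { unfold e'. apply Rmult_lt_reg_r with (2 * (hnorm h + 1)); [lra|].
    field_simplify; [|lra]. nra. }
  lra.
Qed.

End Main.

Theorem mainTheorem2 (H : Hilbert) (E : H -> R) (gradE : H -> H)
  (A : H -> Prop) (C : H -> H -> Prop) (phi : H -> H) (gamma delta : R) (u0 : H) :
  is_C1_gradient E gradE ->
  is_open A ->
  peak_selection E A C phi ->
  AC1 A C ->
  AC2 A C phi gamma delta ->
  Ran A phi u0 ->
  gradE u0 <> hzero ->
  continuous_at_on A phi u0 ->
  let alpha := (1 / 2) * (1 - delta) * cos gamma in
  exists (V : H -> Prop) (sstar : R),
    is_open V /\ V u0 /\ sstar > 0 /\
    forall u, V u -> Ran A phi u ->
      gradE u <> hzero /\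
      forall s, Sset E gradE A phi alpha u s -> sstar <= s.
Proof.
  intros HC1 HA Hps HAC1 HAC2 Hu0 Hg0 Hcont alpha.
  pose proof HC1 as [Hdiff Hgc].
  destruct (fix_phi _ _ _ _ _ Hps Hu0) as [Fu0 Au0].
  destruct HAC2 as [[g1 g2] [[d1 d2] HAC]].
  set (g0 := gradE u0) in *.
  set (n0 := hnorm g0).
  assert (n0pos : 0 < n0).
  { destruct (hnorm_pos g0) as [|Z]; auto. exfalso. apply Hg0. apply hnorm_zero_inv. auto. }
  set (ka := cos gamma).
  assert (kapos : 0 < ka) by (apply cos_gt_0; lra).
  assert (kale : ka <= 1) by (apply COS_bound).
  set (eps := n0 * ka / 16).
  assert (epos : eps > 0) by (unfold eps; nra).
  destruct (Hgc u0 eps epos) as [r1 [r1pos Hr1]].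
  destruct (HAC u0 Hu0) as [r [rpos Hr]].
  destruct (HA u0 Au0) as [rA [rApos HrA]].
  assert (mpos : Rmin r r1 / 2 > 0) by (apply Rdiv_lt_0_compat; [apply Rmin_glb_lt|]; lra).
  destruct (Hcont _ mpos) as [rf [rfpos Hrf]].
  rewrite Fu0 in Hrf.
  set (R0 := Rmin (Rmin r1 r) (Rmin rA rf) / 2).
  assert (R0pos : 0 < R0).
  { unfold R0. apply Rdiv_lt_0_compat; [repeat apply Rmin_glb_lt|]; lra. }
  assert (R01 : R0 <= r1 / 2).
  { unfold R0. pose proof (Rmin_l (Rmin r1 r) (Rmin rA rf)). pose proof (Rmin_l r1 r). lra. }
  assert (R02 : R0 <= r / 2).
  { unfold R0. pose proof (Rmin_l (Rmin r1 r) (Rmin rA rf)). pose proof (Rmin_r r1 r). lra. }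
  assert (R03 : R0 <= rA / 2).
  { unfold R0. pose proof (Rmin_r (Rmin r1 r) (Rmin rA rf)). pose proof (Rmin_l rA rf). lra. }
  assert (R04 : R0 <= rf / 2).
  { unfold R0. pose proof (Rmin_r (Rmin r1 r) (Rmin rA rf)). pose proof (Rmin_r rA rf). lra. }
  assert (Mr : Rmin r r1 <= r) by apply Rmin_l.
  assert (Mr1 : Rmin r r1 <= r1) by apply Rmin_r.
  set (s0 := R0 / 4).
  exists (ball u0 R0), (s0 / 2).
  split; [apply ball_open|].
  split; [unfold ball; rewrite hsub_self, hnorm_zero; lra|].
  split; [unfold s0; lra|].
  intros u Hu HRu.
  unfold ball in Hu.
  destruct (fix_phi _ _ _ _ _ Hps HRu) as [Fu Au].
  set (g := gradE u).
  assert (Hgg0 : hnorm (hsub g g0) < eps) by (apply Hr1; lra).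
  assert (ngb : n0 - eps <= hnorm g).
  { unfold n0. rewrite <- (hadd_sub_cancel g0 g).
    pose proof (hnorm_triangle (hsub g0 g) g). rewrite hnorm_sub_sym in H0. lra. }
  set (ng := hnorm g) in *.
  assert (epsle : eps <= n0 / 16) by (unfold eps; nra).
  assert (ngpos : 0 < ng) by lra.
  assert (Hgnz : g <> hzero).
  { intro Z. unfold ng in ngpos. rewrite Z, hnorm_zero in ngpos. lra. }
  split; [exact Hgnz|].
  assert (Key : Sstar E gradE A phi alpha u s0).
  { assert (s0e : s0 = R0 / 4) by reflexivity. assert (s0pos : 0 < s0) by lra.
    set (w := hscal (s0 / ng) g). set (d := hopp w).
    assert (Hd : hnorm d = s0).
    { unfold d. rewrite hnorm_opp. unfold w. rewrite hnorm_scal.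
      rewrite Rabs_pos_eq by (apply Rlt_le, Rdiv_lt_0_compat; lra). fold ng. field. lra. }
    assert (Hdu : hnorm (hsub (hadd u d) u0) < R0 + s0).
    { rewrite hsub_add_l. pose proof (hnorm_triangle (hsub u u0) d). lra. }
    assert (Aus : A (hadd u d)) by (apply HrA; unfold ball; lra).
    pose proof Hps as [_ Hps'].
    destruct (Hps' u Au) as (_ & Hri & _ & _ & Hmax). rewrite Fu in Hri, Hmax.
    assert (Horth : orth d (C u)).
    { intros y Hy. unfold d, w. rewrite hinner_opp_l, hinner_scal.
      pose proof (grad_orth E gradE (C u) u HC1 Hri Hmax y Hy) as Z. change (gradE u) with g in Z. rewrite Z. ring. }
    set (x := phi (hadd u d)).
    destruct (Hps' (hadd u d) Aus) as (_ & _ & _ & Cx & _). fold x in Cx.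
    assert (Hx : hnorm (hsub x u0) < Rmin r r1 / 2) by (apply Hrf; auto; lra).
    destruct (Hr u d HRu ltac:(unfold ball; lra) ltac:(unfold ball; rewrite hsub_zero; lra)
      Horth Aus x Cx ltac:(unfold ball; lra)) as [c [t [s' [Cc [Ht [Hag Hxe]]]]]].
    destruct Hag as [[dnz [Hs'n Hac]] | [dz _]].
    2:{ exfalso. rewrite dz, hnorm_zero in Hd. lra. }
    rewrite Hs'n, Hd in Hac. rewrite Hd in Hs'n.
    set (q := hinner d s' / (s0 * s0)) in *.
    assert (Hq : -1 <= q <= 1).
    { pose proof (cauchy d s') as Cs. rewrite Hd, Hs'n in Cs. apply abs_le_inv in Cs.
      unfold q. split.
      - apply Rmult_le_reg_r with (s0 * s0); [nra|]. field_simplify; lra.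
      - apply Rmult_le_reg_r with (s0 * s0); [nra|]. field_simplify; lra. }
    assert (Hkq : ka <= q).
    { pose proof (acos_bound q). pose proof PI_RGT_0.
      destruct (Rle_lt_or_eq_dec _ _ Hac) as [Hlt|Heq].
      - left. rewrite <- (cos_acos q Hq). unfold ka.
        apply cos_decreasing_1; lra.
      - right. unfold ka. rewrite <- Heq. apply cos_acos; auto. }
    assert (Hds : ka * (s0 * s0) <= hinner d s').
    { unfold q in Hkq. apply Rmult_le_reg_r with (/ (s0 * s0)).
      apply Rinv_0_lt_compat; nra. field_simplify; try lra.
      replace (hinner d s' / (s0 * s0)) with (hinner d s' / s0 ^ 2) in Hkq by (field; lra). lra. }
    assert (Hdg : hinner d s' = - (s0 / ng) * hinner g s').
    { unfold d, w. rewrite hinner_opp_l, hinner_scal. ring. }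
    set (G := hinner g s') in *.
    assert (HG : G <= - ng * ka * s0).
    { assert (G * s0 = - ng * hinner d s') by (rewrite Hdg; field; lra).
      nra. }
    assert (Ec : E c <= E u) by (apply Hmax; auto).
    set (h := hscal t s') in *.
    destruct (MVT_cor2 (fun tau => E (hadd c (hscal tau h)))
      (fun tau => hinner (gradE (hadd c (hscal tau h))) h) 0 1 Rlt_0_1
      (fun th _ => deriv_line E gradE c h th HC1)) as [th [Hmvt Hth]].
    cbv beta in Hmvt. rewrite hscal_one, hscal_zero, hadd_zero_r, <- Hxe in Hmvt.
    set (xi := hadd c (hscal th h)) in *.
    assert (Hh : hnorm h = t * s0).
    { unfold h. rewrite hnorm_scal, Hs'n, Rabs_pos_eq by lra. ring. }
    assert (Hc : hnorm (hsub c u0) <= hnorm h + hnorm (hsub x u0)).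
    { pose proof (hnorm_sub_tri c u0 x) as T.
      assert (hnorm (hsub c x) = hnorm h) by (rewrite hnorm_sub_sym, Hxe, hsub_add_cancel; reflexivity).
      lra. }
    assert (Hxi : hnorm (hsub xi u0) < r1).
    { unfold xi. rewrite hsub_add_l.
      pose proof (hnorm_triangle (hsub c u0) (hscal th h)).
      rewrite hnorm_scal, Rabs_pos_eq in H0 by lra.
      pose proof (hnorm_pos h). nra. }
    specialize (Hr1 _ Hxi). change (gradE u0) with g0 in Hr1.
    assert (Hdg2 : hnorm (hsub (gradE xi) g) < 2 * eps).
    { pose proof (hnorm_sub_tri (gradE xi) g g0). rewrite (hnorm_sub_sym g0 g) in H0. lra. }
    assert (HB : hinner (gradE xi) s' <= - ng * ka * s0 + 2 * eps * s0).
    { replace (hinner (gradE xi) s') with (G + hinner (hsub (gradE xi) g) s')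
        by (rewrite hinner_sub_l; unfold G; ring).
      pose proof (cauchy_le (hsub (gradE xi) g) s'). rewrite Hs'n in H0. nra. }
    assert (Hth' : hinner (gradE xi) h = t * hinner (gradE xi) s')
      by (unfold h; apply hinner_scal_r).
    split; [lra|]. split; [exact Aus|].
    change (E x - E u < - alpha * s0 * ng).
    unfold alpha. fold ka.
    assert (e2 : 2 * eps <= ng * ka / 4) by (unfold eps in *; nra).
    set (B := hinner (gradE xi) s') in *.
    assert (HB2 : B <= - (3/4) * ng * ka * s0) by nra.
    assert (P3 : 0 < ng * ka * s0).
    { apply Rmult_lt_0_compat; [|lra]. apply Rmult_lt_0_compat; lra. }
    assert (P4 : 0 <= (t - (1 - delta)) * (- B)) by (apply Rmult_le_pos; lra).
    assert (P5 : (1 - delta) * B <= (1 - delta) * (- (3/4) * ng * ka * s0))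
      by (apply Rmult_le_compat_l; lra).
    assert (P6 : 0 < (1 - delta) * (ng * ka * s0)) by (apply Rmult_lt_0_compat; lra).
    rewrite Hth' in Hmvt. nra. }
  intros s [_ [m [[Hub _] Hm]]].
  specialize (Hub _ Key). lra.
Qed.
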